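(* Let $\Gamma=(\mathcal{A},\Theta,p,c)$ be a basic game that is a potential game whose potential $\Phi_\theta$ is convex for every $\theta$, and let $\mathcal{I}=(\gamma,\mathcal{T},\pi)$ be an information structure. Define, for interim flow profiles $\hat y$, $\Phi_\pi(\hat y)=\sum_{\theta\in\Theta}\sum_{\tau\in\mathcal{T}}p(\theta)\pi(\tau\mid\theta)\Phi_\theta(y(\tau))$. Then for every $\alpha>0$, every Bayesian Wardrop $\alpha$-equilibrium $\hat y$ of $(\Gamma,\mathcal{I})$ satisfies $\Phi_\pi(\hat y)\le\min_{\hat z}\Phi_\pi(\hat z)+\alpha$, where the minimum is over all interim flow profiles $\hat z$.
   Context: Basic game: $\Gamma=(\mathcal{A},\Theta,p,c)$ with $\mathcal{A}$ a finite set of actions, $\Theta$ a finite set of states, $p\in\Delta(\Theta)$ a full-support prior, and $c=(c_a)_{a\in\mathcal{A}}$ with each $c_a:\mathcal{Y}\times\Theta\to\mathbb{R}$ continuous, where $\mathcal{Y}=\Delta(\mathcal{A})=\{y\in\mathbb{R}^{\mathcal{A}}_{\ge0}:\sum_a y_a=1\}$. For $\gamma>0$, $\Delta_\gamma(\mathcal{A})=\{y\in\mathbb{R}^{\mathcal{A}}_{\ge0}:\sum_a y_a=\gamma\}$. $\Gamma$ is a potential game if for each $\theta$ there is an open set $\widetilde{\mathcal{Y}}\supseteq\mathcal{Y}$ in $\mathbb{R}^{\mathcal{A}}$ and a continuously differentiable $\Phi_\theta:\widetilde{\mathcal{Y}}\to\mathbb{R}$ with $\partial\Phi_\theta(y)/\partial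 y_a=c_a(y,\theta)$ for all $a$ and $y\in\mathcal{Y}$. Information structure: $\mathcal{I}=(\gamma,\mathcal{T},\pi)$ consisting of a finite set $\mathcal{K}$ of populations with sizes $\gamma^k>0$, $\sum_k\gamma^k=1$; finite type sets $\mathcal{T}^k$, $\mathcal{T}=\prod_k\mathcal{T}^k$; and $\pi:\Theta\to\Delta(\mathcal{T})$. An interim flow profile is $\hat y=(y^k(\tau^k))_{k,\tau^k}$ with $y^k(\tau^k)\in\Delta_{\gamma^k}(\mathcal{A})$; total flow $y(\tau)=\sum_k y^k(\tau^k)$. Let $P(\tau^k)=\sum_\theta\sum_{\tau^{-k}}p(\theta)\pi(\tau^k,\tau^{-k}\mid\theta)$. For $\varepsilon\ge0$, $\hat y$ is a Bayesian Wardrop $\varepsilon$-equilibrium of $(\Gamma,\mathcal{I})$ if for all $k$, all $\tau^k$ with $P(\tau^k)>0$ and all $a,b$ with $y^k_a(\tau^k)>0$: $\sum_\theta\sum_{\tau^{-k}}p(\theta)\pi(\tau^k,\tau^{-k}\mid\theta)c_a(y(\tau),\theta)\le\sum_\theta\sum_{\tau^{-k}}p(\theta)\pi(\tau^k,\tau^{-k}\mid\theta)c_b(y(\tau),\theta)+\varepsilon P(\tau^k)$. *)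

(* Defs.v *)
From HB Require Import structures.
From mathcomp Require Import all_boot all_order all_algebra.
From mathcomp Require Import all_classical all_reals all_analysis.
Set Implicit Arguments. Unset Strict Implicit. Unset Printing Implicit Defensive.
Import Order.TTheory GRing.Theory Num.Theory.
Import numFieldNormedType.Exports.
Local Open Scope classical_set_scope.
Local Open Scope ring_scope.

(* Actions are 'I_n; flow vectors y are row vectors 'rV[R]_n, y 0 a = y_a. *)

Definition Delta_g (R : realType) (n : nat) (g : R) : set 'rV[R]_n :=
  [set y | (forall a : 'I_n, 0 <= y 0 a) /\ \sum_(a < n) y 0 a = g].
Arguments Delta_g {R} n g.

Definition Ysimplex (R : realType) (n : nat) : set 'rV[R]_n := Delta_g n 1.
Arguments Ysimplex {R} n.

Definition evec (R : realType) (n : nat) (a : 'I_n) : 'rV[R]_n := delta_mx 0 a.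
Arguments evec {R n} a.

Definition is_potential (R : realType) (n : nat) (U : set 'rV[R]_n)
  (Phi : 'rV[R]_n -> R) (c : 'I_n -> 'rV[R]_n -> R) : Prop :=
  [/\ open U, Ysimplex n `<=` U,
      (forall y, U y -> differentiable Phi y),
      (forall (a : 'I_n) y, U y -> {for y, continuous (fun z => 'D_(evec a) Phi z)}) &
      (forall (a : 'I_n) y, Ysimplex n y -> 'D_(evec a) Phi y = c a y)].

Definition convex_on_Y (R : realType) (n : nat) (Phi : 'rV[R]_n -> R) : Prop :=
  forall (y z : 'rV[R]_n) (t : R), Ysimplex n y -> Ysimplex n z -> 0 <= t <= 1 ->
    Phi (t *: y + (1 - t) *: z) <= t * Phi y + (1 - t) * Phi z.

Notation profile K T := {dffun forall k : K, T k}.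

Definition interim_profile (R : realType) (n : nat) (K : finType) (T : K -> finType)
  (gamma : K -> R) (yh : forall k : K, T k -> 'rV[R]_n) : Prop :=
  forall (k : K) (t : T k), Delta_g n (gamma k) (yh k t).

Definition total_flow (R : realType) (n : nat) (K : finType) (T : K -> finType)
  (yh : forall k : K, T k -> 'rV[R]_n) (tau : profile K T) : 'rV[R]_n :=
  \sum_(k : K) yh k (tau k).

Definition Pmarg (R : realType) (Th K : finType) (T : K -> finType)
  (p : Th -> R) (pi : Th -> profile K T -> R) (k : K) (t : T k) : R :=
  \sum_(th : Th) \sum_(tau : profile K T | tau k == t) p th * pi th tau.

Definition interim_cost (R : realType) (n : nat) (Th K : finType) (T : K -> finType)
  (c : 'I_n -> 'rV[R]_n -> Th -> R) (p : Th -> R) (pi : Th -> profile K T -> R)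
  (yh : forall k : K, T k -> 'rV[R]_n) (k : K) (t : T k) (a : 'I_n) : R :=
  \sum_(th : Th) \sum_(tau : profile K T | tau k == t)
     p th * pi th tau * c a (total_flow yh tau) th.

Definition bayes_wardrop_eq (R : realType) (n : nat) (Th K : finType) (T : K -> finType)
  (c : 'I_n -> 'rV[R]_n -> Th -> R) (p : Th -> R) (pi : Th -> profile K T -> R)
  (yh : forall k : K, T k -> 'rV[R]_n) (eps : R) : Prop :=
  forall (k : K) (t : T k), 0 < Pmarg p pi t ->
    forall a b : 'I_n, 0 < yh k t 0 a ->
      interim_cost c p pi yh t a <= interim_cost c p pi yh t b + eps * Pmarg p pi t.

Definition Phi_pi (R : realType) (n : nat) (Th K : finType) (T : K -> finType)
  (Phi : Th -> 'rV[R]_n -> R) (p : Th -> R) (pi : Th -> profile K T -> R)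
  (yh : forall k : K, T k -> 'rV[R]_n) : R :=
  \sum_(th : Th) \sum_(tau : profile K T) p th * pi th tau * Phi th (total_flow yh tau).

(* Main.v *)
Require Import Defs.
From HB Require Import structures.
From mathcomp Require Import all_boot all_order all_algebra.
From mathcomp Require Import all_classical all_reals all_analysis.
From mathcomp Require Import ring lra.
Import Order.TTheory GRing.Theory Num.Theory.
Import numFieldNormedType.Exports.
Local Open Scope classical_set_scope.
Local Open Scope ring_scope.
Lemma grad_ineq (R : realType) (n : nat) (Phi : 'rV[R]_n -> R) (y z : 'rV[R]_n) :
  differentiable Phi y -> convex_on_Y Phi -> Ysimplex n y -> Ysimplex n z ->
  'D_(z - y) Phi y <= Phi z - Phi y.
Proof.
move=> dP cP Yy Yz.
have gcv := @diff_derivable _ _ _ _ _ (z - y) dP.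
rewrite /derivable in gcv.
set g := (fun h : R => _) in gcv.
have sub : (0:R)^'+ `=>` 0^'.
  move=> P; rewrite /at_right /dnbhs /within /=.
  apply: filterS => x H x0; apply: H; by rewrite gt_eqF.
have gr : g x @[x --> 0^'+] --> 'D_(z - y) Phi y.
  exact: (cvg_trans (cvg_app g sub) gcv).
apply: (cvgr_to_le gr).
near=> t.
have t0 : 0 < t by near: t; exact: nbhs_right_gt.
have t1 : t <= 1 by apply/ltW; near: t; exact: nbhs_right_lt.
rewrite /g /= /shift.
have H := cP z y t Yz Yy (introT andP (conj (ltW t0) t1)).
have -> : t *: (z - y) + y = t *: z + (1 - t) *: y.
  by rewrite scalerBr scalerBl scale1r -addrA [- _ + y]addrC.
rewrite -[X in X <= _]/(t^-1 * _) ler_pdivrMl //.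
rewrite lerBlDr (le_trans H) //.
have -> : t * (Phi z - Phi y) + Phi y = t * Phi z + (1 - t) * Phi y by ring.
by [].
Unshelve. all: by end_near.
Qed.
Lemma D_expand (R : realType) (n : nat) (Phi : 'rV[R]_n -> R) (y v : 'rV[R]_n) :
  differentiable Phi y ->
  'D_v Phi y = \sum_(a < n) v 0 a * 'D_(evec a) Phi y.
Proof.
move=> dP; rewrite deriveE // {1}(row_sum_delta v) linear_sum.
apply: eq_bigr => a _; rewrite linearZ deriveE //.
Qed.
Lemma rearr (R : realType) (n : nat) (Th K : finType) (T : K -> finType)
  (c : 'I_n -> 'rV[R]_n -> Th -> R) (p : Th -> R) (pi : Th -> profile K T -> R)
  (yh zh : forall k : K, T k -> 'rV[R]_n) :
  \sum_(th : Th) \sum_(tau : profile K T) p th * pi th tau *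
     \sum_(a < n) ((total_flow yh tau) 0 a - (total_flow zh tau) 0 a) * c a (total_flow yh tau) th
  = \sum_(k : K) \sum_(t : T k) \sum_(a < n) (yh k t 0 a - zh k t 0 a) * interim_cost c p pi yh t a.
Proof.
pose G k th tau a := p th * pi th tau * c a (total_flow yh tau) th *
   (yh k (tau k) 0 a - zh k (tau k) 0 a).
symmetry.
transitivity (\sum_(k : K) \sum_(t : T k) \sum_(a < n) \sum_(th : Th)
   \sum_(tau : profile K T | tau k == t) G k th tau a).
  apply: eq_bigr => k _; apply: eq_bigr => t _; apply: eq_bigr => a _.
  rewrite /interim_cost mulr_sumr; apply: eq_bigr => th _.
  rewrite mulr_sumr; apply: eq_bigr => tau /eqP <-; rewrite /G; ring.
transitivity (\sum_(k : K) \sum_(a < n) \sum_(th : Th) \sum_(tau : profile K T) G k th tau a).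
  apply: eq_bigr => k _; rewrite exchange_big; apply: eq_bigr => a _.
  rewrite exchange_big; apply: eq_bigr => th _.
  by rewrite [RHS](partition_big (fun tau : profile K T => tau k) xpredT).
rewrite exchange_big /=.
transitivity (\sum_(a < n) \sum_(th : Th) \sum_(tau : profile K T) \sum_(k : K) G k th tau a).
  apply: eq_bigr => a _; rewrite exchange_big; apply: eq_bigr => th _.
  by rewrite exchange_big.
rewrite exchange_big; apply: eq_bigr => th _.
rewrite exchange_big; apply: eq_bigr => tau _.
rewrite mulr_sumr; apply: eq_bigr => a _.
rewrite /total_flow !summxE -sumrB mulr_suml mulr_sumr; apply: eq_bigr => k _.
rewrite /G; ring.
Qed.
Lemma local_bound (R : realType) (n : nat) (g P alpha : R) (y z C : 'I_n -> R) :
  0 < g -> (forall a, 0 <= y a) -> (forall a, 0 <= z a) ->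
  \sum_(a < n) y a = g -> \sum_(a < n) z a = g ->
  (forall a b, 0 < y a -> C a <= C b + alpha * P) ->
  \sum_(a < n) (y a - z a) * C a <= alpha * g * P.
Proof.
move=> g0 y0 z0 hy hz hC.
have e1 : \sum_(a < n) (y a - z a) * C a =
   \sum_(a < n) y a * C a - \sum_(a < n) z a * C a.
  by rewrite -sumrB; apply: eq_bigr => a _; ring.
have e2 : \sum_(a < n) \sum_(b < n) y a * z b * (C a - C b) =
   (\sum_(a < n) y a * C a) * g - g * \sum_(b < n) z b * C b.
  transitivity (\sum_(a < n) (y a * C a * g - y a * \sum_(b < n) z b * C b)).
    apply: eq_bigr => a _.
    rewrite -hz mulr_sumr mulr_sumr -sumrB; apply: eq_bigr => b _; ring.
  by rewrite sumrB -!mulr_suml hy.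
have e3 : \sum_(a < n) \sum_(b < n) y a * z b * (C a - C b) <=
   \sum_(a < n) \sum_(b < n) y a * z b * (alpha * P).
  apply: ler_sum => a _; apply: ler_sum => b _.
  have [ya|ya] := boolP (0 < y a).
    by apply: ler_wpM2l; [exact: mulr_ge0 | have := hC a b ya; lra].
  have -> : y a = 0 by apply/eqP; rewrite eq_le y0 andbT leNgt.
  by rewrite !mul0r.
have e4 : \sum_(a < n) \sum_(b < n) y a * z b * (alpha * P) = g * g * (alpha * P).
  rewrite -{1}hy -hz mulr_suml mulr_suml; apply: eq_bigr => a _.
  rewrite mulr_sumr mulr_suml; apply: eq_bigr => b _; ring.
have : g * \sum_(a < n) (y a - z a) * C a <= g * (alpha * g * P).
  rewrite e1.
  have -> : g * (\sum_(a < n) y a * C a - \sum_(a < n) z a * C a) =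
     (\sum_(a < n) y a * C a) * g - g * \sum_(b < n) z b * C b by ring.
  rewrite -e2 (le_trans e3) // e4; rewrite le_eqVlt; apply/orP; left; apply/eqP; ring.
by rewrite ler_pM2l.
Qed.

Lemma tf_simplex (R : realType) (n : nat) (K : finType) (T : K -> finType)
  (gamma : K -> R) (xh : forall k : K, T k -> 'rV[R]_n) (tau : profile K T) :
  interim_profile gamma xh -> \sum_(k : K) gamma k = 1 ->
  Ysimplex n (total_flow xh tau).
Proof.
move=> hx hg; split.
  move=> a; rewrite /total_flow summxE; apply: sumr_ge0 => k _.
  by have [h _] := hx k (tau k); exact: h.
rewrite /total_flow -hg.
under eq_bigr do rewrite summxE.
rewrite exchange_big; apply: eq_bigr => k _.
by have [_ h] := hx k (tau k).
Qed.
Theorem mainTheorem6 (R : realType) (n : nat) (Th : finType)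
  (p : Th -> R) (c : 'I_n -> 'rV[R]_n -> Th -> R)
  (Phi : Th -> 'rV[R]_n -> R) (U : Th -> set 'rV[R]_n)
  (K : finType) (gamma : K -> R) (T : K -> finType)
  (pi : Th -> {dffun forall k : K, T k} -> R)
  (* basic game *)
  (hp_pos : forall th, 0 < p th) (hp_sum : \sum_(th : Th) p th = 1)
  (hc_cont : forall (a : 'I_n) (th : Th),
      {within Ysimplex n, continuous (fun y => c a y th)})
  (* potential game with convex potentials *)
  (hpot : forall th, is_potential (U th) (Phi th) (fun a y => c a y th))
  (hconv : forall th, convex_on_Y (Phi th))
  (* information structure *)
  (hg_pos : forall k, 0 < gamma k) (hg_sum : \sum_(k : K) gamma k = 1)
  (hpi_nn : forall th tau, 0 <= pi th tau)
  (hpi_sum : forall th, \sum_(tau : {dffun forall k : K, T k}) pi th tau = 1)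
  (alpha : R) (halpha : 0 < alpha)
  (yh : forall k : K, T k -> 'rV[R]_n)
  (hyh : interim_profile gamma yh)
  (heq : bayes_wardrop_eq c p pi yh alpha) :
  forall zh : forall k : K, T k -> 'rV[R]_n, interim_profile gamma zh ->
    Phi_pi Phi p pi yh <= Phi_pi Phi p pi zh + alpha.
Proof.
move=> zh hzh.
have w0 : forall th tau, 0 <= p th * pi th tau.
  by move=> th tau; apply: mulr_ge0; [exact: ltW | exact: hpi_nn].
have step2 : forall th tau,
  Phi th (total_flow yh tau) - Phi th (total_flow zh tau) <=
  \sum_(a < n) ((total_flow yh tau) 0 a - (total_flow zh tau) 0 a) *
     c a (total_flow yh tau) th.
  move=> th tau.
  have Yy := @tf_simplex _ _ _ _ _ _ tau hyh hg_sum.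
  have Yz := @tf_simplex _ _ _ _ _ _ tau hzh hg_sum.
  have [_ sub hd _ hD] := hpot th.
  have dP := hd _ (sub _ Yy).
  have := @grad_ineq _ _ _ _ _ dP (hconv th) Yy Yz.
  rewrite D_expand // => H.
  set S := \sum_(a < n) _ * c a _ th.
  have E : \sum_(a < n) (total_flow zh tau - total_flow yh tau) 0 a *
       'D_(evec a) (Phi th) (total_flow yh tau) = - S.
    rewrite /S -[in RHS]sumrN; apply: eq_bigr => a _; rewrite hD // !mxE; ring.
  rewrite E in H; lra.
have Pm0 : forall k (t : T k), 0 <= Pmarg p pi t.
  by move=> k t; apply: sumr_ge0 => th _; apply: sumr_ge0 => tau _; exact: w0.
have Psum : forall k, \sum_(t : T k) Pmarg p pi t = 1.
  move=> k; rewrite /Pmarg exchange_big -hp_sum; apply: eq_bigr => th _.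
  rewrite -[in RHS](mulr1 (p th)) -(hpi_sum th) mulr_sumr.
  by rewrite [RHS](partition_big (fun tau : profile K T => tau k) xpredT).
have eqall : forall k (t : T k) a b, 0 < yh k t 0 a ->
    interim_cost c p pi yh t a <= interim_cost c p pi yh t b + alpha * Pmarg p pi t.
  move=> k t a b ya.
  have [Ppos|Pneg] := ltP 0 (Pmarg p pi t); first exact: heq.
  have P0 : Pmarg p pi t = 0 by apply/eqP; rewrite eq_le Pneg Pm0.
  have C0 : forall a', interim_cost c p pi yh t a' = 0.
    move=> a'; rewrite /interim_cost; apply: big1 => th _.
    have h1 : \sum_(tau : profile K T | tau k == t) p th * pi th tau = 0.
      apply: (psumr_eq0P _ P0) => // th' _; apply: sumr_ge0 => tau _; exact: w0.
    have h2 := psumr_eq0P (fun tau _ => w0 th tau) h1.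
    by apply: big1 => tau /h2 ->; rewrite mul0r.
  by rewrite !C0 P0 mulr0 addr0.
have main : Phi_pi Phi p pi yh - Phi_pi Phi p pi zh <= alpha.
  apply: (@le_trans _ _ (\sum_(th : Th) \sum_(tau : profile K T) p th * pi th tau *
     \sum_(a < n) ((total_flow yh tau) 0 a - (total_flow zh tau) 0 a) *
       c a (total_flow yh tau) th)).
    rewrite /Phi_pi -sumrB; apply: ler_sum => th _.
    rewrite -sumrB; apply: ler_sum => tau _.
    by rewrite -mulrBr; apply: ler_wpM2l; [exact: w0 | exact: step2].
  rewrite rearr.
  apply: (@le_trans _ _ (\sum_(k : K) \sum_(t : T k) alpha * gamma k * Pmarg p pi t)).
    apply: ler_sum => k _; apply: ler_sum => t _.
    apply: local_bound.
    - exact: hg_pos.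
    - by have [h _] := hyh k t.
    - by have [h _] := hzh k t.
    - by have [_ h] := hyh k t.
    - by have [_ h] := hzh k t.
    - by move=> a b; exact: eqall.
  rewrite -[leRHS]mulr1 -hg_sum mulr_sumr le_eqVlt; apply/orP; left.
  by apply/eqP/eq_bigr => k _; rewrite -mulr_sumr Psum mulr1.
lra.
Qed.
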